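(* Let $(X,\Sigma)$ be a measurable space, $\mathcal{E}\subseteq\Sigma$ a paving, $\mathbf{F}_0^2\subseteq\mathbf{F}\times\mathbf{F}$ a nonempty set of pairs, $\boldsymbol{\mu}=(\mu_t)_{t\ge0}$ a nonincreasing family of monotone measures on $\Sigma$, and $\mathscr{A}=\{\mathsf{A}(\cdot|E)\colon E\in\mathcal{E}\}$ a family of conditional aggregation operators which is $1$-quasi-subadditive on $\mathbf{F}_0^2$. Then $$\boldsymbol{\mu}_{\mathscr{A}}(f+g,t)\le\boldsymbol{\mu}_{\mathscr{A}}(f,0.5t)\vee\boldsymbol{\mu}_{\mathscr{A}}(g,0.5t)$$ for every $t\ge0$ and every $(f,g)\in\mathbf{F}_0^2$.
   Context: $a\vee b=\max\{a,b\}$. $\Sigma^0=\Sigma\setminus\{\emptyset\}$. $\mathbf{F}$ denotes the set of all $\Sigma$-measurable, nonnegative, bounded functions $f\colon X\to[0,\infty)$. A monotone measure is a map $\mu\colon\Sigma\to[0,\infty]$ with $\mu(B)\le\mu(C)$ whenever $B\subseteq C$, $\mu(\emptyset)=0$ and $\mu(X)>0$; $\boldsymbol{\mu}$ is nonincreasing if $\mu_s(E)\ge\mu_t(E)$ for all $E\in\Sigma$ and $s<t$. For $E\in\Sigma^0$, a conditional aggregation operator (CAO) w.r.t. $E$ is a map $\mathsf{A}(\cdot|E)\colon\mathbf{F}\to[0,\infty]$ such that (C1) $\mathsf{A}(f|E)\le\mathsf{A}(g|E)$ whenever $f(x)\le g(x)$ for all $x\in E$, and (C2) $\mathsf{A}(\mathbf{1}_{X\setminus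 E}|E)=0$. A paving is a family $\mathcal{E}\subseteq\Sigma$ with $\emptyset\in\mathcal{E}$; $\mathcal{E}^0=\mathcal{E}\setminus\{\emptyset\}$. The family $\mathscr{A}$ consists of CAOs $\mathsf{A}(\cdot|E)$ w.r.t. $E$ for $E\in\mathcal{E}^0$, with the convention $\mathsf{A}(\cdot|\emptyset)=\infty$. It is $1$-quasi-subadditive on $\mathbf{F}_0^2$ if $\mathsf{A}(f+g|E)\le\mathsf{A}(f|E)+\mathsf{A}(g|E)$ for all $(f,g)\in\mathbf{F}_0^2$ and all $E\in\mathcal{E}^0$. The generalized level measure is $\boldsymbol{\mu}_{\mathscr{A}}(f,t)=\sup\{\mu_t(E)\colon \mathsf{A}(f|E)\ge t,\ E\in\mathcal{E}\}$ for $t\ge0$. *)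

(* Defs.v *)
From HB Require Import structures.
From mathcomp Require Import all_boot all_order all_algebra.
From mathcomp Require Import all_classical all_reals all_analysis.
Set Implicit Arguments. Unset Strict Implicit. Unset Printing Implicit Defensive.
Import Order.TTheory GRing.Theory Num.Theory.
Local Open Scope classical_set_scope.
Local Open Scope ring_scope.

Section Defs.
Context {d : measure_display} {T : measurableType d} {R : realType}.

Definition Fset : set (T -> R) :=
  [set f : T -> R | measurable_fun setT f /\ (forall x, 0 <= f x) /\
           exists M : R, forall x, f x <= M].

Definition monotone_measure (mu : set T -> \bar R) : Prop :=
  (forall B, measurable B -> (0 <= mu B)%E) /\
  (forall B C, measurable B -> measurable C -> B `<=` C -> (mu B <= mu C)%E) /\
  mu set0 = 0%E /\ (0 < mu setT)%E.

Definition nonincreasing_family (mu : R -> set T -> \bar R) : Prop :=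
  (forall t, 0 <= t -> monotone_measure (mu t)) /\
  (forall s t E, 0 <= s -> s < t -> measurable E -> (mu t E <= mu s E)%E).

Definition paving (P : set (set T)) : Prop :=
  P `<=` measurable /\ P set0.

Definition CAO (E : set T) (AE : (T -> R) -> \bar R) : Prop :=
  (forall f, Fset f -> (0 <= AE f)%E) /\
  (forall f g, Fset f -> Fset g -> (forall x, E x -> f x <= g x) ->
     (AE f <= AE g)%E) /\
  AE (\1_(~` E)) = 0%E.

Definition CAO_family (P : set (set T)) (A : set T -> (T -> R) -> \bar R) : Prop :=
  forall E, P E -> E <> set0 -> CAO E (A E).

Definition quasi_subadditive1 (P : set (set T)) (A : set T -> (T -> R) -> \bar R)
  (F02 : set ((T -> R) * (T -> R))) : Prop :=
  forall f g, F02 (f, g) -> forall E, P E -> E <> set0 ->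
    (A E (f \+ g)%R <= A E f + A E g)%E.

(* generalized level measure; the convention A(.|emptyset) = +oo is encoded by
   letting E = set0 always satisfy the constraint A(f|E) >= t. *)
Definition level_measure (P : set (set T)) (A : set T -> (T -> R) -> \bar R)
  (mu : R -> set T -> \bar R) (f : T -> R) (t : R) : \bar R :=
  ereal_sup [set mu t E | E in [set E | P E /\ (E = set0 \/ (t%:E <= A E f)%E)]].

End Defs.

(* Main.v *)
Require Import Defs.
From mathcomp Require Import all_boot all_order all_algebra.
From mathcomp Require Import all_classical all_reals all_analysis.
Import Order.TTheory GRing.Theory Num.Theory.
Local Open Scope classical_set_scope.
Local Open Scope ring_scope.

Theorem corollary3p15 (d : measure_display) (T : measurableType d) (R : realType)
  (P : set (set T)) (F02 : set ((T -> R) * (T -> R)))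
  (mu : R -> set T -> \bar R) (A : set T -> (T -> R) -> \bar R) :
  paving P ->
  F02 `<=` (fun fg => Fset fg.1 /\ Fset fg.2) ->
  F02 !=set0 ->
  nonincreasing_family mu ->
  CAO_family P A ->
  quasi_subadditive1 P A F02 ->
  forall (t : R) (f g : T -> R), 0 <= t -> F02 (f, g) ->
    (level_measure P A mu (f \+ g)%R t <=
     maxe (level_measure P A mu f (t / 2)) (level_measure P A mu g (t / 2)))%E.
Proof.
move=> [Pm P0] HF _ [_ Hmon] HC Hq t f g t0 Ffg.
have [Ff Fg] := HF _ Ffg.
have mut : forall E, measurable E -> (mu t E <= mu (t / 2)%R E)%E.
  move=> E mE; have [->|tpos] := eqVneq t 0.
    by rewrite mul0r.
  apply: Hmon => //; first by rewrite divr_ge0.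
  have tp : 0 < t by rewrite lt0r tpos t0.
  by rewrite ltr_pdivrMr // ltr_pMr // ltr1n.
apply: ub_ereal_sup => _ [E [PE HE] <-].
apply: (le_trans (mut E (Pm E PE))).
have Hf : forall h : T -> R, ((t / 2)%R%:E <= A E h)%E \/ E = set0 -> (mu (t/2)%R E <= level_measure P A mu h (t / 2))%E.
  move=> h Hh; apply: ereal_sup_ubound; exists E => //; split => //.
  by case: Hh; [right|left].
have [E0|E0] := pselect (E = set0).
  by apply: (le_trans (Hf f (or_intror E0))); rewrite le_max lexx.
have HtE : (t%:E <= A E (f \+ g)%R)%E by case: HE.
have [CAf _] := HC E PE E0.
have Af0 := CAf f Ff; have Ag0 := CAf g Fg.
have := le_trans HtE (Hq f g Ffg E PE E0).
case: (leP (t / 2)%:E (A E f)) => Hfl.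
  by move=> _; apply: (le_trans (Hf f (or_introl Hfl))); rewrite le_max lexx.
case: (leP (t / 2)%:E (A E g)) => Hgl.
  by move=> _; apply: (le_trans (Hf g (or_introl Hgl))); rewrite le_max lexx orbT.
move=> H; have := lteD Hfl Hgl.
by rewrite -EFinD -splitr => /(le_lt_trans H); rewrite ltxx.
Qed.
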